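(* Let $f:\mathbb{R}^n\to\mathbb{R}$ be convex, with the constants $L_j$ as in the context. Then for any $j\in\{1,\dots,n\}$ and all $x',x''\in\mathcal F$, \[ f(x'')\le f(x')+\nabla f(x')^T(x''-x')+\frac{L_j}{2}\|x'-x''\|_{\langle j\rangle}^2. \]
   Context: $n\ge2$; $\mathcal F=\{x\in\mathbb{R}^n: e^Tx=b,\ l_i\le x_i\le u_i\}$ with $e$ the all-ones vector, $b\in\mathbb{R}$, $l_i\in\mathbb{R}\cup\{-\infty\}$, $u_i\in\mathbb{R}\cup\{+\infty\}$, $l_i<u_i$. $f$ is continuously differentiable with Lipschitz continuous gradient on $\mathbb{R}^n$. For $i\ne j$, $L_{i,j}>0$ are constants such that for every $x\in\mathbb{R}^n$ and $s,t\in\mathbb{R}$, $|\nabla f(x+s(e_i-e_j))^T(e_i-e_j)-\nabla f(x+t(e_i-e_j))^T(e_i-e_j)|\le L_{i,j}|s-t|$ ($e_i$ the $i$th unit vector); $L_{i,i}=0$; $L_j=\sum_{i=1}^nL_{i,j}$. $\|x\|_{\langle j\rangle}=\sqrt{\sum_{i\ne j}x_i^2}$. *)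

(* Defs.v *)
From HB Require Import structures.
From mathcomp Require Import all_boot all_order all_algebra.
From mathcomp Require Import all_classical all_reals all_analysis.
Set Implicit Arguments. Unset Strict Implicit. Unset Printing Implicit Defensive.
Import Order.TTheory GRing.Theory Num.Theory.
Import numFieldNormedType.Exports.
Local Open Scope ring_scope.

Section Defs.
Variables (R : realType) (n : nat).

Definition dotv (x y : 'rV[R]_n) : R := \sum_(k < n) x ord0 k * y ord0 k.

Definition unitv (i : 'I_n) : 'rV[R]_n := \row_(k < n) (k == i)%:R.

Definition onesv : 'rV[R]_n := \row_(k < n) 1.

Definition normj (j : 'I_n) (x : 'rV[R]_n) : R :=
  Num.sqrt (\sum_(i < n | i != j) x ord0 i ^+ 2).

Definition is_gradient (f : 'rV[R]_n -> R) (g : 'rV[R]_n -> 'rV[R]_n) : Prop :=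
  forall x, differentiable f x /\ forall h, 'd f x h = dotv (g x) h.

Definition lipschitz_map (g : 'rV[R]_n -> 'rV[R]_n) : Prop :=
  exists K : R, forall x y, `|g x - g y| <= K * `|x - y|.

Definition convex_fun (f : 'rV[R]_n -> R) : Prop :=
  forall (x y : 'rV[R]_n) (t : R), 0 <= t -> t <= 1 ->
    f (t *: x + (1 - t) *: y) <= t * f x + (1 - t) * f y.

Definition feasible (b : R) (l u : 'I_n -> \bar R) (x : 'rV[R]_n) : Prop :=
  dotv onesv x = b /\
  forall i, (l i <= (x ord0 i)%:E)%E /\ ((x ord0 i)%:E <= u i)%E.

End Defs.

(* Main.v *)
Require Import Defs.
From HB Require Import structures.
From mathcomp Require Import all_boot all_order all_algebra.
From mathcomp Require Import all_classical all_reals all_analysis.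
From mathcomp Require Import ring lra.
Import Order.TTheory GRing.Theory Num.Theory.
Import numFieldNormedType.Exports.
Local Open Scope ring_scope.

Section S.
Variables (R : realType) (n : nat).
Implicit Types (f : 'rV[R]_n -> R).

Lemma line_derive f (x w : 'rV[R]_n) (t : R) :
  differentiable f (x + t *: w) ->
  is_derive t 1 (fun s => f (x + s *: w)) ('d f (x + t *: w) w).
Proof.
move=> df.
have E : (fun h : R => h^-1 *: (((fun s => f (x + s *: w)) \o shift t) (h *: 1) - f (x + t *: w)))
  = (fun h : R => h^-1 *: ((f \o shift (x + t *: w)) (h *: w) - f (x + t *: w))).
  apply/funext => h /=; congr (_ *: (f _ - _)).
  by rewrite scaler1 scalerDl addrCA.
have dd : derivable f (x + t *: w) w by apply: diff_derivable.
split; first by rewrite /derivable E.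
by rewrite /derive E -deriveE.
Qed.

Lemma descent f g (hgrad : is_gradient f g) (x w : 'rV[R]_n) (K : R) :
  (forall s : R, 0 <= s -> s <= 1 ->
     `| dotv (g (x + s *: w)) w - dotv (g x) w | <= K * s) ->
  f (x + w) <= f x + dotv (g x) w + K / 2.
Proof.
move=> HL.
pose phi := fun s : R => f (x + s *: w).
pose D := fun s : R => dotv (g (x + s *: w)) w.
have Hd : forall s : R, is_derive s (1:R) phi (D s).
  move=> s; have [df dfe] := hgrad (x + s *: w).
  by rewrite /D -dfe; apply: line_derive.
pose psi := (phi - (fun s => D 0 * s) - (fun s => K / 2 * s ^+ 2)).
have Hpsi : forall s : R, is_derive s (1:R) psi (D s - D 0 - K * s).
  move=> s; apply: is_derive_eq; rewrite /GRing.scale /= !mulr1; lra.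
have [c c01 hc] := @MVT R psi (fun s => D s - D 0 - K * s) 0 1 ltr01
   (fun s _ => Hpsi s)
   (derivable_within_continuous (fun s _ => @ex_derive _ _ _ _ _ _ _ (Hpsi s))).
have hc0 : 0 <= c by move: c01; rewrite in_itv /= => /andP[/ltW].
have hc1 : c <= 1 by move: c01; rewrite in_itv /= => /andP[_ /ltW].
have := HL c hc0 hc1; rewrite -/(D c) (_ : dotv (g x) w = D 0); last first.
  by rewrite /D scale0r addr0.
move: hc; rewrite /psi !fctE /phi scale0r scale1r !addr0 subr0 mulr1 => hc.
rewrite ler_norml => /andP[_ h2].
rewrite expr1n expr0n /= mulr0 mulr1 mulr0 subr0 in hc.
lra.
Qed.

Lemma dotvZ (a v : 'rV[R]_n) (c : R) : dotv a (c *: v) = c * dotv a v.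
Proof. by rewrite /dotv mulr_sumr; apply: eq_bigr => k _; rewrite mxE mulrCA. Qed.

Lemma dotvD (a u v : 'rV[R]_n) : dotv a (u + v) = dotv a u + dotv a v.
Proof. by rewrite /dotv -big_split; apply: eq_bigr => k _; rewrite mxE mulrDr. Qed.

Lemma dotv0 (a : 'rV[R]_n) : dotv a 0 = 0.
Proof. by rewrite /dotv big1 // => k _; rewrite mxE mulr0. Qed.

Lemma dotv_sum (a : 'rV[R]_n) (I : Type) (r : seq I) (P : pred I) (F : I -> 'rV[R]_n) :
  dotv a (\sum_(i <- r | P i) F i) = \sum_(i <- r | P i) dotv a (F i).
Proof. exact: (big_morph _ (dotvD a) (dotv0 a)). Qed.

Lemma sum_pos (s : seq 'I_n) (lam : 'I_n -> R) :
  s != [::] -> (forall i, i \in s -> 0 < lam i) -> 0 < \sum_(i <- s) lam i.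
Proof.
case: s => [//|a s] _ hp; rewrite big_cons.
have h1 : 0 < lam a by apply: hp; rewrite in_cons eqxx.
have h2 : 0 <= \sum_(i <- s) lam i.
  rewrite big_seq; apply: sumr_ge0 => i hi; apply/ltW/hp; by rewrite in_cons hi orbT.
lra.
Qed.

Lemma jensen f (hconv : convex_fun f) (s : seq 'I_n) (lam : 'I_n -> R) (z : 'I_n -> 'rV[R]_n) :
  s != [::] -> (forall i, i \in s -> 0 < lam i) ->
  f ((\sum_(i <- s) lam i)^-1 *: \sum_(i <- s) lam i *: z i)
  <= (\sum_(i <- s) lam i)^-1 * \sum_(i <- s) lam i * f (z i).
Proof.
elim: s => [//|a s IH] _ hp.
have hla : 0 < lam a by apply: hp; rewrite in_cons eqxx.
have hp' : forall i, i \in s -> 0 < lam i by move=> i hi; apply: hp; rewrite in_cons hi orbT.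
rewrite !big_cons.
have [->|sn] := eqVneq s [::].
  rewrite !big_nil !addr0 scalerA mulVf ?gt_eqF // scale1r mulrA mulVf ?gt_eqF //.
  by rewrite mul1r.
have hS' := @sum_pos s lam sn hp'.
set S' := \sum_(i <- s) lam i in hS' IH *.
set Z := \sum_(i <- s) lam i *: z i in IH *.
set F := \sum_(i <- s) lam i * f (z i) in IH *.
have hS : 0 < lam a + S' by apply: addr_gt0.
have := hconv (z a) (S'^-1 *: Z) (lam a / (lam a + S')).
have t0 : 0 <= lam a / (lam a + S') by apply: divr_ge0; apply: ltW.
have t1 : lam a / (lam a + S') <= 1.
  by rewrite ler_pdivrMr // mul1r lerDl ltW.
move=> /(_ t0 t1).
have e1 : 1 - lam a / (lam a + S') = S' / (lam a + S').
  by field; rewrite gt_eqF.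
rewrite e1 scalerA.
have -> : lam a / (lam a + S') *: z a + S' / (lam a + S') * S'^-1 *: Z =
   (lam a + S')^-1 *: (lam a *: z a + Z).
  rewrite scalerDr scalerA; congr (_ *: _ + _ *: _).
  - by rewrite mulrC.
  - by field; apply/andP; split; rewrite gt_eqF.
move=> /le_trans; apply.
have := IH sn hp'.
move=> /(ler_wpM2l (divr_ge0 (ltW hS') (ltW hS))) h.
have -> : (lam a + S')^-1 * (lam a * f (z a) + F) =
   lam a / (lam a + S') * f (z a) + S' / (lam a + S') * (S'^-1 * F).
  by field; apply/andP; split; rewrite gt_eqF.
by rewrite lerD2l.
Qed.

Lemma descent_dir f g (hgrad : is_gradient f g) (v : 'rV[R]_n) (L : R)
  (hL : forall (x : 'rV[R]_n) (s t : R),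
      `| dotv (g (x + s *: v)) v - dotv (g (x + t *: v)) v | <= L * `|s - t|)
  (x : 'rV[R]_n) (c : R) :
  f (x + c *: v) <= f x + c * dotv (g x) v + L / 2 * c ^+ 2.
Proof.
have := @descent f g hgrad x (c *: v) (L * c ^+ 2).
rewrite dotvZ.
have -> : L * c ^+ 2 / 2 = L / 2 * c ^+ 2 by rewrite mulrAC.
apply=> s s0 s1.
rewrite !dotvZ -mulrBr normrM scalerA.
have H := hL x (s * c) 0; rewrite scale0r addr0 subr0 in H.
apply: (@le_trans _ _ (`|c| * (L * `|s * c|))).
  by apply: ler_wpM2l => //; apply: normr_ge0.
have hc2 : `|c| * `|c| = c ^+ 2 by rewrite -normrM -expr2 ger0_norm // sqr_ge0.
rewrite normrM (ger0_norm s0) -hc2; rewrite le_eqVlt; apply/orP; left; apply/eqP; ring.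
Qed.
End S.

Theorem lemma4 (R : realType) (n : nat) (hn : (2 <= n)%N)
  (b : R) (l u : 'I_n -> \bar R)
  (hl : forall i, l i != +oo%E) (hu : forall i, u i != -oo%E)
  (hlu : forall i, (l i < u i)%E)
  (f : 'rV[R]_n -> R) (g : 'rV[R]_n -> 'rV[R]_n)
  (hgrad : is_gradient f g) (hgc : continuous g) (hglip : lipschitz_map g)
  (L : 'I_n -> 'I_n -> R)
  (hLpos : forall i j, i != j -> 0 < L i j)
  (hLdiag : forall i, L i i = 0)
  (hLij : forall (i j : 'I_n) (x : 'rV[R]_n) (s t : R), i != j ->
      `| dotv (g (x + s *: (unitv R i - unitv R j))) (unitv R i - unitv R j)
       - dotv (g (x + t *: (unitv R i - unitv R j))) (unitv R i - unitv R j) |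
      <= L i j * `|s - t|)
  (hconv : convex_fun f)
  (j : 'I_n) (x' x'' : 'rV[R]_n)
  (hx' : feasible b l u x') (hx'' : feasible b l u x'') :
  f x'' <= f x' + dotv (g x') (x'' - x')
           + (\sum_(i < n) L i j) / 2 * normj j (x' - x'') ^+ 2.
Proof.
set d := x'' - x'.
have hsum : \sum_(k < n) d ord0 k = 0.
  case: hx' => h1 _; case: hx'' => h2 _.
  have -> : \sum_(k < n) d ord0 k = dotv (onesv R n) x'' - dotv (onesv R n) x'.
    rewrite /dotv -sumrB; apply: eq_bigr => k _; rewrite !mxE !mul1r.
    by [].
  by rewrite h1 h2 subrr.
set Lj := \sum_(i < n) L i j.
have hLj : Lj = \sum_(i < n | i != j) L i j by rewrite /Lj (bigD1 j) //= hLdiag add0r.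
have [i0 hi0] : exists i0 : 'I_n, i0 != j.
  have h0 : (0 < n)%N by apply: leq_trans hn.
  have h1 : (1 < n)%N by [].
  case: (eqVneq (val j) 0%N) => hj.
    by exists (Ordinal h1); apply/eqP => /(congr1 val) /=; rewrite hj.
  by exists (Ordinal h0); apply/eqP => /(congr1 val) /= h; move/eqP: hj; apply; exact: (esym h).
have hLjpos : 0 < Lj.
  rewrite hLj (bigD1 i0) //=.
  have := hLpos _ _ hi0.
  have : 0 <= \sum_(i < n | (i != j) && (i != i0)) L i j.
    by apply: sumr_ge0 => i /andP[hij _]; apply/ltW/hLpos.
  lra.
pose v (i : 'I_n) := unitv R i - unitv R j.
pose lam (i : 'I_n) := L i j / Lj.
pose z (i : 'I_n) := x' + (d ord0 i / lam i) *: v i.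
pose s := [seq i <- index_enum 'I_n | i != j].
have hs : s != [::].
  apply/eqP => hs0; have : i0 \in s by rewrite mem_filter hi0 mem_index_enum.
  by rewrite hs0.
have hpos : forall i, i \in s -> 0 < lam i.
  move=> i; rewrite mem_filter => /andP[hij _].
  by apply: divr_gt0 => //; apply: hLpos.
have hlam1 : \sum_(i <- s) lam i = 1.
  by rewrite big_filter -mulr_suml -hLj divff // gt_eqF.
have hJ := @jensen R n f hconv s lam z hs hpos.
rewrite hlam1 invr1 scale1r mul1r !big_filter in hJ.
have hlam1' : \sum_(i < n | i != j) lam i = 1 by rewrite -big_filter.
have hlampos : forall i, i != j -> 0 < lam i.
  by move=> i hij; apply: divr_gt0 => //; apply: hLpos.
have hdv : \sum_(i < n | i != j) d ord0 i *: v i = d.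
  apply/rowP => k; rewrite summxE.
  have -> : \sum_(i < n | i != j) (d ord0 i *: v i) ord0 k =
     \sum_(i < n | i != j) (d ord0 i * (k == i)%:R)
     - (\sum_(i < n | i != j) d ord0 i) * (k == j)%:R.
    by rewrite mulr_suml -sumrB; apply: eq_bigr => i _; rewrite !mxE mulrBr.
  have [->|hk] := eqVneq k j.
    rewrite big1; last by move=> i hij; rewrite eq_sym (negbTE hij) mulr0.
    move: hsum; rewrite (bigD1 j) //= mulr1 sub0r => hs'.
    by apply/eqP; rewrite eq_sym -addr_eq0 hs'.
  rewrite mulr0 subr0 (bigD1 k) //= eqxx mulr1 big1 ?addr0 //.
  by move=> i /andP[_ hik]; rewrite eq_sym (negbTE hik) mulr0.
have hz : \sum_(i < n | i != j) lam i *: z i = x''.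
  rewrite (eq_bigr (fun i => lam i *: x' + d ord0 i *: v i)); last first.
    move=> i hij; rewrite /z scalerDr scalerA mulrC divfK //.
    by rewrite gt_eqF // hlampos.
  by rewrite big_split /= -scaler_suml hlam1' scale1r hdv /d addrC subrK.
rewrite hz in hJ.
apply: (le_trans hJ).
have hB : forall i, i != j -> lam i * f (z i) <=
   lam i * f x' + d ord0 i * dotv (g x') (v i) + Lj / 2 * d ord0 i ^+ 2.
  move=> i hij.
  have hD := @descent_dir R n f g hgrad (v i) (L i j) (fun x s t => hLij i j x s t hij) x' (d ord0 i / lam i).
  have hli := hlampos i hij.
  apply: (@le_trans _ _ (lam i * (f x' + d ord0 i / lam i * dotv (g x') (v i) + L i j / 2 * (d ord0 i / lam i) ^+ 2))).
    by apply: ler_wpM2l => //; apply: ltW.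
  have hLi := hLpos i j hij.
  rewrite le_eqVlt; apply/orP; left; apply/eqP.
  rewrite /lam; field.
  by apply/andP; split; rewrite gt_eqF.
apply: le_trans; first by apply: ler_sum => i hij; exact: hB.
rewrite !big_split /= -mulr_suml.
rewrite hlam1' mul1r -mulr_sumr.
have -> : \sum_(i < n | i != j) d ord0 i * dotv (g x') (v i) = dotv (g x') d.
  by rewrite -{2}hdv dotv_sum; apply: eq_bigr => i _; rewrite dotvZ.
have -> : normj j (x' - x'') ^+ 2 = \sum_(i < n | i != j) d ord0 i ^+ 2.
  rewrite /normj sqr_sqrtr; last by apply: sumr_ge0 => i _; apply: sqr_ge0.
  by apply: eq_bigr => i _; rewrite /d !mxE -opprB sqrrN.
by [].
Qed.
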